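(* Let $X$ be a Banach lattice, $S$ a convex $C_0$-semigroup on $X$, $T>0$ and $x_0\in X$. Then there exist $L\ge0$ and $r>0$ such that $\sup_{t\in[0,T]}\|S_x(t)y\|\le L\|y\|$ for all $x\in X$ with $\|x-x_0\|\le r$ and all $y\in X$ with $\|y\|\le r$.
   Context: An operator $T\colon X\to X$ is convex if $T(\lambda x+(1-\lambda)y)\le\lambda Tx+(1-\lambda)Ty$ for all $x,y\in X$, $\lambda\in[0,1]$, and bounded if $\sup_{\|x\|\le r}\|Tx\|<\infty$ for all $r>0$. A convex $C_0$-semigroup is a family $(S(t))_{t\ge0}$ of bounded convex operators $X\to X$ with $S(0)=\mathrm{id}$, $S(t+s)=S(t)S(s)$ for all $s,t\ge0$, and $S(t)x\to x$ as $t\downarrow0$ for all $x$. For $t\ge0$ and $x,y\in X$, $S_x(t)y:=S(t)(x+y)-S(t)x$. *)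

(* Defs.v *)
From HB Require Import structures.
From mathcomp Require Import all_boot all_order all_algebra.
From mathcomp Require Import all_classical all_reals all_analysis.
Set Implicit Arguments. Unset Strict Implicit. Unset Printing Implicit Defensive.
Import Order.TTheory GRing.Theory Num.Theory.
Import numFieldNormedType.Exports.
Local Open Scope classical_set_scope.
Local Open Scope ring_scope.

Record banach_lattice (R : realType) (X : completeNormedModType R)
    (le : X -> X -> Prop) (sup : X -> X -> X) : Prop := BanachLattice {
  bl_refl : forall x, le x x;
  bl_antisym : forall x y, le x y -> le y x -> x = y;
  bl_trans : forall x y z, le x y -> le y z -> le x z;
  bl_add : forall x y z, le x y -> le (x + z) (y + z);
  bl_scale : forall (a : R) x y, 0 <= a -> le x y -> le (a *: x) (a *: y);
  bl_sup_ubl : forall x y, le x (sup x y);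
  bl_sup_ubr : forall x y, le y (sup x y);
  bl_sup_least : forall x y z, le x z -> le y z -> le (sup x y) z;
  bl_norm : forall x y, le (sup x (- x)) (sup y (- y)) -> `|x| <= `|y|
}.

Definition convex_op (R : realType) (X : completeNormedModType R)
    (le : X -> X -> Prop) (T : X -> X) : Prop :=
  forall (x y : X) (l : R), 0 <= l <= 1 ->
    le (T (l *: x + (1 - l) *: y)) (l *: T x + (1 - l) *: T y).

Definition bounded_op (R : realType) (X : completeNormedModType R)
    (T : X -> X) : Prop :=
  forall r : R, 0 < r -> exists M : R, forall x : X, `|x| <= r -> `|T x| <= M.

(* convex C_0-semigroup, indexed by t : R with t >= 0 (values at t < 0
   are irrelevant). *)
Definition convex_C0_semigroup (R : realType) (X : completeNormedModType R)
    (le : X -> X -> Prop) (S : R -> X -> X) : Prop :=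
  [/\ (forall t, 0 <= t -> convex_op le (S t) /\ bounded_op (S t)),
      (forall x, S 0 x = x),
      (forall s t x, 0 <= s -> 0 <= t -> S (t + s) x = S t (S s x)) &
      (forall x, S^~ x @ 0^'+ --> x)].

Definition Sx (R : realType) (X : completeNormedModType R)
    (S : R -> X -> X) (x : X) (t : R) (y : X) : X := S t (x + y) - S t x.

(* Main.v *)
Require Import Defs.
From HB Require Import structures.
From mathcomp Require Import all_boot all_order all_algebra.
From mathcomp Require Import all_classical all_reals all_analysis.
From mathcomp Require Import ring lra.
Import Order.TTheory GRing.Theory Num.Theory.
Import numFieldNormedType.Exports.
Local Open Scope classical_set_scope.
Local Open Scope ring_scope.

Section Lat.
Variables (R : realType) (X : completeNormedModType R) (le : X -> X -> Prop) (sup : X -> X -> X).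
Hypothesis BL : banach_lattice le sup.

Lemma le_add2 {x y u v} : le x y -> le u v -> le (x + u) (y + v).
Proof.
move=> h1 h2; apply: (bl_trans BL (bl_add BL u h1)).
rewrite (addrC y u) (addrC y v); exact: (bl_add BL y h2).
Qed.

Lemma le_opp {x y} : le x y -> le (- y) (- x).
Proof.
move=> h; have := bl_add BL (- x - y) h.
by rewrite addrA addrN add0r addrCA addrN addr0.
Qed.

Lemma half_double (v : X) : (2^-1 : R) *: (v + v) = v.
Proof.
by rewrite -mulr2n -[v *+ 2]scaler_nat scalerA mulVf ?scale1r // pnatr_eq0.
Qed.

Lemma abs_ge0 x : le 0 (sup x (- x)).
Proof.
have h := le_add2 (bl_sup_ubl BL x (-x)) (bl_sup_ubr BL x (-x)).
rewrite addrN in h.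
have := @bl_scale _ _ _ _ BL 2^-1 _ _ ^~ h.
by rewrite scaler0 half_double; apply; rewrite invr_ge0 ler0n.
Qed.

Lemma abs_pos {p} : le 0 p -> sup p (- p) = p.
Proof.
move=> h; apply: (bl_antisym BL); last exact: (bl_sup_ubl BL).
apply: (bl_sup_least BL); first exact: (bl_refl BL).
have := le_opp h; rewrite oppr0 => h'; exact: (bl_trans BL h' h).
Qed.

Lemma norm_abs x : `|sup x (- x)| <= `|x|.
Proof. apply: (bl_norm BL); rewrite (abs_pos (abs_ge0 x)); exact: (bl_refl BL). Qed.

Lemma sandwich {z a b} : le (- b) z -> le z a -> `|z| <= `|a| + `|b|.
Proof.
move=> hb ha.
set u := sup a (- a) + sup b (- b).
have u0 : le 0 u by have := le_add2 (abs_ge0 a) (abs_ge0 b); rewrite addr0.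
have h1 : le z u.
  apply: (bl_trans BL ha); have := le_add2 (bl_sup_ubl BL a (-a)) (abs_ge0 b).
  by rewrite addr0.
have h2 : le (- z) u.
  have := le_opp hb; rewrite opprK => hb'; apply: (bl_trans BL hb').
  have := le_add2 (abs_ge0 a) (bl_sup_ubl BL b (-b)); by rewrite add0r.
have : `|z| <= `|u|.
  apply: (bl_norm BL); rewrite (abs_pos u0); exact: (bl_sup_least BL).
move=> /le_trans; apply; apply: (le_trans (ler_normD _ _)).
by apply: lerD; apply: norm_abs.
Qed.

End Lat.
Arguments le_add2 {R X le sup} BL {x y u v}.
Arguments le_opp {R X le sup} BL {x y}.
Arguments sandwich {R X le sup} BL {z a b}.

Section Lip.
Variables (R : realType) (X : completeNormedModType R) (le : X -> X -> Prop) (sup : X -> X -> X).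
Hypothesis BL : banach_lattice le sup.

Lemma cvx_lip (A : X -> X) x r M : convex_op le A -> 0 < r ->
  (forall z, `|z - x| <= 2 * r -> `|A z| <= M) ->
  forall u v, `|u - x| <= r -> `|v - u| <= r ->
  `|A v - A u| <= 4 * M / r * `|v - u|.
Proof.
move=> cA r0 hM u v hu hvu.
have [->|yn0] := eqVneq v u; first by rewrite !subrr normr0 mulr0.
set y := v - u.
have ny0 : 0 < `|y| by rewrite normr_gt0 subr_eq0.
set l := `|y| / r.
set h := (r / `|y|) *: y.
have lh : l *: h = y.
  by rewrite /h scalerA /l mulrA divfK ?gt_eqF // divff ?gt_eqF // scale1r.
have nh : `|h| = r.
  by rewrite /h normrZ ger0_norm ?divr_ge0 ?ltW // divfK ?gt_eqF.
have l0 : 0 <= l by rewrite divr_ge0 ?ltW.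
have l1 : l <= 1 by rewrite ler_pdivrMr // mul1r.
have hxp : `|u + h - x| <= 2 * r.
  rewrite addrAC; have := ler_normD (u - x) h; rewrite nh => H; lra.
have hxm : `|u - h - x| <= 2 * r.
  rewrite addrAC; have := ler_normD (u - x) (- h); rewrite normrN nh => H; lra.
have hMu : `|A u| <= M by apply: hM; lra.
have l01 : 0 <= l <= 1 by rewrite l0 l1.
have c1 := cA (u + h) u l l01.
have e1 : l *: (u + h) + (1 - l) *: u = v.
  by rewrite scalerDr lh scalerBl scale1r addrC addrA subrK /y addrC subrK.
rewrite e1 in c1.
have hup := bl_add BL (- A u) c1.
have e2 : l *: A (u + h) + (1 - l) *: A u - A u = l *: (A (u + h) - A u).
  by rewrite scalerBl scale1r scalerBr addrA addrAC addrK.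
rewrite e2 in hup.
set m := (1 + l)^-1.
have l1n0 : 1 + l != 0 by rewrite gt_eqF // ltr_pwDl.
have hm1 : (1 + l) * m = 1 by rewrite /m mulfV.
have e1m : 1 - m = l * m by rewrite /m; field.
have m0 : 0 <= m by rewrite /m invr_ge0; lra.
have m1 : m <= 1 by rewrite /m invf_le1; lra.
have m01 : 0 <= m <= 1 by rewrite m0 m1.
have c2 := cA v (u - h) m m01.
have e3 : m *: v + (1 - m) *: (u - h) = u.
  rewrite e1m (mulrC l m) -scalerA -scalerDr scalerBr lh.
  have -> : v + (l *: u - y) = (1 + l) *: u.
    rewrite /y opprB addrCA [v + _]addrC subrK.
    by rewrite scalerDl scale1r addrC.
  by rewrite scalerA mulrC hm1 scale1r.
rewrite e3 in c2.
have c3 := bl_scale BL (ltW (ltr_pwDl ltr01 l0)) c2.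
rewrite e1m scalerDr !scalerA hm1 mulrCA hm1 mulr1 scale1r in c3.
have c4 := bl_add BL (- (l *: A (u - h)) - A u) c3.
have e4 : (1 + l) *: A u + (- (l *: A (u - h)) - A u) = - (l *: (A (u - h) - A u)).
  by rewrite scalerDl scale1r scalerBr opprB addrC addrA subrK addrC.
have e5 : A v + l *: A (u - h) + (- (l *: A (u - h)) - A u) = A v - A u.
  by rewrite addrA addrK.
rewrite e4 e5 in c4.
have := sandwich BL c4 hup.
have ha : `|l *: (A (u + h) - A u)| <= l * (M + M).
  rewrite normrZ ger0_norm //; apply: ler_wpM2l => //.
  apply: (le_trans (ler_normB _ _)); apply: lerD => //; exact: hM.
have hb : `|l *: (A (u - h) - A u)| <= l * (M + M).
  rewrite normrZ ger0_norm //; apply: ler_wpM2l => //.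
  apply: (le_trans (ler_normB _ _)); apply: lerD => //; exact: hM.
move=> /le_trans; apply.
have -> : 4 * M / r * `|y| = l * (M + M) + l * (M + M).
  by rewrite /l; field; rewrite gt_eqF.
exact: lerD.
Qed.
End Lip.
Arguments cvx_lip {R X le sup} BL {A x r M}.

Section Semi.
Variables (R : realType) (X : completeNormedModType R) (le : X -> X -> Prop) (sup : X -> X -> X).
Hypothesis BL : banach_lattice le sup.
Variable S : R -> X -> X.
Hypothesis HS : convex_C0_semigroup le S.

Lemma S_cont t : 0 <= t -> continuous (S t).
Proof.
move=> t0 x; case: HS => H1 H0 Hsg Hc.
have [cA bA] := H1 t t0.
have [M hM] := bA (`|x| + 2) (ltr_pwDr (ltr0Sn _ 1) (normr_ge0 x)).
have hM' : forall z, `|z - x| <= 2 * 1 -> `|S t z| <= M.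
  move=> z hz; apply: hM; rewrite mulr1 in hz.
  have := ler_normD x (z - x); rewrite addrC subrK => H; lra.
have M0 : 0 <= M by apply: le_trans (hM' x _); rewrite ?subrr ?normr0.
apply/cvgrPdist_le => e e0.
set c := 4 * M / 1.
have c0 : 0 <= c by rewrite /c divr1; lra.
have d0 : 0 < Order.min 1 (e / (c + 1)) by rewrite lt_min ltr01 divr_gt0 //; lra.
near=> z.
have hz : `|z - x| <= Order.min 1 (e / (c + 1)).
  rewrite distrC; near: z; exact: (@cvgr_dist_le _ _ _ _ _ id x cvg_id _ d0).
rewrite distrC; apply: (le_trans (cvx_lip BL cA ltr01 hM' x z _ _)).
- by rewrite subrr normr0.
- by apply: le_trans hz _; rewrite ge_min lexx.
rewrite -/c; have hz2 : `|z - x| <= e / (c + 1) by apply: le_trans hz _; rewrite ge_min lexx orbT.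
apply: (le_trans (ler_wpM2l c0 hz2)).
rewrite mulrA ler_pdivrMr; last lra.
nra.
Unshelve. all: by end_near.
Qed.

Lemma S_ext (E : X -> Prop) d r : 0 < d ->
  (forall z s, E z -> 0 <= s <= d -> `|S s z| <= r) ->
  forall n : nat, exists K, forall z t, E z -> 0 <= t <= n%:R * d -> `|S t z| <= K.
Proof.
move=> d0 hE; case: HS => H1 H0 Hsg Hc.
elim=> [|n [K IH]].
  exists r => z t Ez /andP[t0 tn]; apply: hE => //.
  rewrite mul0r in tn; rewrite t0 /=; lra.
have nd0 : 0 <= n%:R * d by rewrite mulr_ge0 // ltW.
have [M hM] := proj2 (H1 _ nd0) (`|r| + 1) (ltr_pwDr ltr01 (normr_ge0 r)).
exists (Order.max K M) => z t Ez /andP[t0 tn].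
case: (lerP t (n%:R * d)) => ht.
  by apply: le_trans (IH z t Ez _) _; rewrite ?t0 ?ht // le_max lexx.
have -> : t = n%:R * d + (t - n%:R * d) by rewrite addrC subrK.
rewrite -natr1 mulrDl mul1r in tn.
rewrite Hsg //; last lra.
apply: le_trans (hM _ _) _; last by rewrite le_max lexx orbT.
have := hE z (t - n%:R * d) Ez; rewrite subr_ge0 (ltW ht) /= => /(_ ltac:(lra)) h.
have := ler_norm r; lra.
Qed.

Lemma S_ptw x T : exists K, forall t, 0 <= t <= T -> `|S t x| <= K.
Proof.
case: HS => H1 H0 Hsg Hc.
have /cvgrPdist_le /(_ 1 ltr01) := Hc x.
rewrite near_withinE => /nbhs_ballP[d /= d0 Hd].
have d20 : 0 < d / 2 by rewrite divr_gt0.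
have hE : forall z s, z = x -> 0 <= s <= d / 2 -> `|S s z| <= `|x| + 1.
  move=> z s -> /andP[s0 sd].
  have [->|sn0] := eqVneq s 0; first by rewrite H0; lra.
  have : ball 0 d s by rewrite -ball_normE /= sub0r normrN ger0_norm //; lra.
  move=> /Hd /= /(_ ltac:(rewrite lt_neqAle eq_sym sn0 s0 //)) h.
  have := ler_normD x (S s x - x); rewrite addrC subrK distrC => h'; lra.
have [K hK] := @S_ext (fun z => z = x) _ _ d20 hE (Num.truncn (T / (d / 2))).+1.
exists K => t /andP[t0 tT]; apply: hK => //; rewrite t0 /=.
have := truncnS_gt (T / (d / 2)); rewrite ltr_pdivrMr // => h; lra.
Qed.

End Semi.

Lemma baire_ball (R : realType) (X : completeNormedModType R) (F : R -> X -> X) (I : set R) :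
  (forall t, I t -> continuous (F t)) ->
  (forall x, exists M, forall t, I t -> `|F t x| <= M) ->
  exists a : X, exists rho : R, exists k : R, 0 < rho /\
    forall z, `|a - z| < rho -> forall t, I t -> `|F t z| <= k.
Proof.
move=> hC BoundedF.
set O := fun n : nat => \bigcup_(t in I) (Num.norm \o F t) @^-1` [set y | y > n%:R].
have O_open : forall n, open (O n).
  move=> n; apply: bigcup_open => i Ii.
  apply: (@open_comp _ _ (Num.norm \o F i) [set y | y > n%:R]); last first.
    exact: open_gt.
  move=> x Hx; apply: continuous_comp; first exact: hC.
  exact: norm_continuous.
set O_inf := \bigcap_i (O i).
have O_infempty : O_inf = set0.
  rewrite -subset0 => x.
  have [M FxM] := BoundedF x; rewrite /O_inf /O /=.
  move=> /(_ (Num.truncn M).+1 Logic.I)[f Ff]; apply/negP; rewrite -leNgt.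
  by apply/ltW; rewrite -truncn_le_nat le_truncn ?FxM.
have ContraBaire : exists i, not (dense (O i)).
  have dOinf : ~ dense O_inf.
    rewrite /dense O_infempty ; apply /existsNP; exists setT; elim.
    - by move=> x; rewrite setI0.
    - by exists point.
    - exact: openT.
  have /contra_not/(_ dOinf) :
      (forall i, open (O i) /\ dense (O i)) -> dense (O_inf).
    exact: Baire.
  move=> /asboolPn /existsp_asboolPn[n /and_asboolP /nandP Hn].
  by exists n; case: Hn => /asboolPn.
have [n [x0 [r H]]] :
    exists n x (r : {posnum R}), (ball x r%:num) `<=` (~` (O n)).
  move: ContraBaire =>
  [i /(denseNE) [ O0 [ [ x /open_nbhs_nbhs /nbhs_ballP [r r0 bxr]
   /((@subsetI_eq0 _ (ball x r) O0 (O i) (O i)))]]]] /(_ bxr) bxrOi.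
  by exists i, x, (PosNum r0); apply/disjoints_subset/bxrOi.
exists x0, r%:num, n%:R; split => // z hz t It.
have /H hOz : ball x0 r%:num z by rewrite -ball_normE.
rewrite leNgt; apply/negP => hlt; apply: hOz; exists t => //.
Qed.

Lemma id1 (V : zmodType) (a x d : V) : (a + (d + d)) + (x + (x - a)) = (x + d) + (x + d).
Proof.
rewrite addrCA [a + _ + (x - a)]addrCA [a + _ - a]addrAC subrr add0r.
by rewrite addrA addrACA.
Qed.

Lemma id2 (V : zmodType) (x d : V) : (x + d) + (x + - d) = x + x.
Proof. by rewrite addrACA subrr addr0. Qed.

Theorem proposition2p2 (R : realType) (X : completeNormedModType R)
    (le : X -> X -> Prop) (sup : X -> X -> X) (S : R -> X -> X)
    (T : R) (x0 : X) :
  banach_lattice le sup -> convex_C0_semigroup le S -> 0 < T ->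
  exists L : R, exists r : R, 0 <= L /\ 0 < r /\
    forall x y : X, `|x - x0| <= r -> `|y| <= r ->
      forall t : R, 0 <= t <= T -> `|Sx S x t y| <= L * `|y|.
Proof.
move=> BL HS T0.
have HS' := HS; case: HS' => H1 H0 Hsg Hc.
have hC : forall t, [set t : R | 0 <= t <= T] t -> continuous (S t).
  by move=> t /= /andP[t0 _]; exact: (@S_cont _ _ _ _ BL S HS t t0).
have hB : forall x, exists M, forall t, [set t : R | 0 <= t <= T] t -> `|S t x| <= M.
  by move=> x; have [K hK] := @S_ptw _ _ _ S HS x T; exists K => t /= /hK.
have [a [rho [k [rho0 hk]]]] := @baire_ball _ _ _ _ hC hB.
set w := x0 + (x0 - a).
have [Mw hMw] := hB w; have [M0 hM0] := hB x0.
set eps := rho / 4.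
have hh : 1 - 2^-1 = 2^-1 :> R by field.
have h2 : 0 <= (2^-1 : R) <= 1 by rewrite invr_ge0 ler0n /= invf_le1 ?ler1n.
have up : forall d t, `|d| <= eps -> 0 <= t <= T ->
    le (S t (x0 + d)) (2^-1 *: (S t (a + (d + d)) + S t w)) /\
    `|2^-1 *: (S t (a + (d + d)) + S t w)| <= k + Mw.
  move=> d t hd It; have /andP[t0 tT] := It.
  split.
    have := proj1 (H1 t t0) (a + (d + d)) w (2^-1) h2.
    by rewrite hh -!scalerDr id1 half_double.
  rewrite normrZ; apply: le_trans (ler_piMl _ _) _.
  - exact: normr_ge0.
  - by rewrite ger0_norm ?invr_ge0 ?ler0n // invf_le1 ?ler1n.
  apply: (le_trans (ler_normD _ _)); apply: lerD; last exact: hMw.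
  apply: hk => //.
  rewrite opprD addrA subrr add0r normrN.
  have := ler_normD d d; rewrite /eps in hd => H; lra.
set K := (k + Mw) + ((k + Mw) + 2 * M0).
have hK : forall d t, `|d| <= eps -> 0 <= t <= T -> `|S t (x0 + d)| <= K.
  move=> d t hd It; have /andP[t0 tT] := It.
  have [hq1 hq2] := up d t hd It.
  have hd' : `|- d| <= eps by rewrite normrN.
  have [hq1' hq2'] := up (- d) t hd' It.
  have c := proj1 (H1 t t0) (x0 + d) (x0 + - d) (2^-1) h2.
  rewrite hh -!scalerDr id2 half_double in c.
  have c2 := bl_scale BL (a := 2) (ler0n _ 2) c.
  rewrite scalerA mulfV ?pnatr_eq0 // scale1r in c2.
  have c3 := le_add2 BL c2 (le_opp BL hq1').
  rewrite addrK in c3.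
  have c4 : le (- (2^-1 *: (S t (a + (- d + - d)) + S t w) - 2 *: S t x0)) (S t (x0 + d)).
    by rewrite opprB.
  apply: (le_trans (sandwich BL c4 hq1)).
  rewrite /K; apply: lerD => //.
  apply: (le_trans (ler_normB _ _)); apply: lerD => //.
  rewrite normrZ ger0_norm ?ler0n //; apply: ler_wpM2l => //; exact: hM0.
have eps0 : 0 < eps by rewrite /eps divr_gt0.
have hz0 : `|0 : X| <= eps by rewrite normr0 ltW.
have hT0 : (0:R) <= 0 <= T by rewrite lexx ltW.
have K0 : 0 <= K := le_trans (normr_ge0 _) (hK 0 0 hz0 hT0).
set r0 := eps / 2.
have r00 : 0 < r0 by rewrite /r0 divr_gt0.
exists (4 * K / r0); exists r0; split; first by apply: divr_ge0; [apply: mulr_ge0 | exact: ltW].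
split => // x y hx hy t It; have /andP[t0 tT] := It.
have hMz : forall z, `|z - x0| <= 2 * r0 -> `|S t z| <= K.
  move=> z hz.
  have hz' : `|z - x0| <= eps by move: hz; rewrite /r0 mulrC divfK // gt_eqF.
  by have := hK (z - x0) t hz' It; rewrite [x0 + _]addrC subrK.
have exy : x + y - x = y by rewrite addrAC subrr add0r.
have := cvx_lip BL (proj1 (H1 t t0)) r00 hMz x (x + y) hx; rewrite exy /Sx; apply.
exact: hy.
Qed.
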